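(* Let $\Omega\subset\mathbb{C}^2$ be a domain, let $h$ be a holomorphic function on $\Omega$, let $\rho(z):=|h(z)|^2-1$ with $d\rho\neq 0$ on $M:=\{z\in\Omega:\rho(z)=0\}$, and let $K$ be a $C^2$-smooth totally real disc contained in $M$. Then $h$ is constant along each leaf of the characteristic foliation of $K$.
   Context: A $C^2$-smooth totally real disc is a compact subset of a $C^2$-smooth submanifold $N$ of $\mathbb{C}^2$ with $T_pN\cap iT_pN=\{0\}$ for all $p\in N$, which is $C^2$-diffeomorphic to the closed unit disc in the plane. For $p\in M$, $T^{\mathbb{C}}_pM:=T_pM\cap iT_pM$. The characteristic foliation of $K$ is the foliation whose leaves are the curves $\gamma$ in $K$ with $\gamma'(t)\in T_{\gamma(t)}K\cap T^{\mathbb{C}}_{\gamma(t)}M$ for all $t$. *)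

(* Defs.v *)
From Stdlib Require Import Reals.
From Coquelicot Require Import Coquelicot.
Open Scope R_scope.

Definition C2 : Type := (C * C)%type.

Definition c2add (u v : C2) : C2 := (Cplus (fst u) (fst v), Cplus (snd u) (snd v)).
Definition c2sub (u v : C2) : C2 := (Cminus (fst u) (fst v), Cminus (snd u) (snd v)).
Definition c2scal (r : R) (u : C2) : C2 := (Cmult (RtoC r) (fst u), Cmult (RtoC r) (snd u)).
Definition c2i (u : C2) : C2 := (Cmult Ci (fst u), Cmult Ci (snd u)).
Definition c2zero : C2 := (RtoC 0, RtoC 0).
Definition c2norm (u : C2) : R := sqrt (Cmod (fst u) ^ 2 + Cmod (snd u) ^ 2).

Definition c2open (U : C2 -> Prop) : Prop :=
  forall z, U z -> exists eps, 0 < eps /\ forall w, c2norm (c2sub w z) < eps -> U w.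

Definition c2connected (U : C2 -> Prop) : Prop :=
  forall A B : C2 -> Prop, c2open A -> c2open B ->
    (forall z, U z -> A z \/ B z) ->
    (forall z, U z -> A z -> B z -> False) ->
    (exists z, U z /\ A z) -> (exists z, U z /\ B z) -> False.

Definition c2domain (U : C2 -> Prop) : Prop :=
  c2open U /\ c2connected U /\ exists z, U z.

Definition holomorphic_on (U : C2 -> Prop) (h : C2 -> C) : Prop :=
  forall z, U z -> exists a1 a2 : C,
    forall eps, 0 < eps -> exists delta, 0 < delta /\
      forall w, c2norm w < delta ->
        Cmod (Cminus (Cminus (h (c2add z w)) (h z))
                     (Cplus (Cmult a1 (fst w)) (Cmult a2 (snd w))))
        <= eps * c2norm w.

Definition is_rdiff (f : C2 -> R) (z : C2) (L : C2 -> R) : Prop :=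
  (forall u v, L (c2add u v) = L u + L v) /\
  (forall r u, L (c2scal r u) = r * L u) /\
  (forall eps, 0 < eps -> exists delta, 0 < delta /\
     forall w, c2norm w < delta ->
       Rabs (f (c2add z w) - f z - L w) <= eps * c2norm w).

(** Tangent space at p of the real hypersurface {rho = 0} (with d rho <> 0):
    the kernel of d rho(p). *)
Definition TM (rho : C2 -> R) (p v : C2) : Prop :=
  forall L, is_rdiff rho p L -> L v = 0.

(** Complex tangent space T^C_p M = T_p M ∩ i T_p M. *)
Definition TCM (rho : C2 -> R) (p v : C2) : Prop :=
  TM rho p v /\ TM rho p (c2i v).

Definition r2open (U : R * R -> Prop) : Prop :=
  forall p, U p -> exists eps, 0 < eps /\
    forall q, Rabs (fst q - fst p) < eps -> Rabs (snd q - snd p) < eps -> U q.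

Definition cdisc (p : R * R) : Prop := fst p ^ 2 + snd p ^ 2 <= 1.

Definition r2cont_at (g : R * R -> R) (p : R * R) : Prop :=
  forall eps, 0 < eps -> exists delta, 0 < delta /\
    forall q, Rabs (fst q - fst p) < delta -> Rabs (snd q - snd p) < delta ->
      Rabs (g q - g p) < eps.

Fixpoint Ck (k : nat) (U : R * R -> Prop) (g : R * R -> R) : Prop :=
  match k with
  | O => forall p, U p -> r2cont_at g p
  | S k' => (forall p, U p -> r2cont_at g p) /\
      exists g1 g2 : R * R -> R,
        (forall p, U p ->
           is_derive (fun t => g (t, snd p)) (fst p) (g1 p) /\
           is_derive (fun t => g (fst p, t)) (snd p) (g2 p)) /\
        Ck k' U g1 /\ Ck k' U g2
  end.

Definition comp1 (u : C2) : R := fst (fst u).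
Definition comp2 (u : C2) : R := snd (fst u).
Definition comp3 (u : C2) : R := fst (snd u).
Definition comp4 (u : C2) : R := snd (snd u).

Definition C2map_Ck (k : nat) (U : R * R -> Prop) (phi : R * R -> C2) : Prop :=
  Ck k U (fun p => comp1 (phi p)) /\ Ck k U (fun p => comp2 (phi p)) /\
  Ck k U (fun p => comp3 (phi p)) /\ Ck k U (fun p => comp4 (phi p)).

Definition pd1 (phi : R * R -> C2) (p : R * R) : C2 :=
  ((Derive (fun t => comp1 (phi (t, snd p))) (fst p),
    Derive (fun t => comp2 (phi (t, snd p))) (fst p)),
   (Derive (fun t => comp3 (phi (t, snd p))) (fst p),
    Derive (fun t => comp4 (phi (t, snd p))) (fst p))).
Definition pd2 (phi : R * R -> C2) (p : R * R) : C2 :=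
  ((Derive (fun t => comp1 (phi (fst p, t))) (snd p),
    Derive (fun t => comp2 (phi (fst p, t))) (snd p)),
   (Derive (fun t => comp3 (phi (fst p, t))) (snd p),
    Derive (fun t => comp4 (phi (fst p, t))) (snd p))).

Definition TK (phi : R * R -> C2) (q v : C2) : Prop :=
  exists p, cdisc p /\ phi p = q /\
    exists a b : R, v = c2add (c2scal a (pd1 phi p)) (c2scal b (pd2 phi p)).

(** phi parametrizes a C^2-smooth totally real disc K = phi(closed unit disc):
    phi is C^2 on an open neighbourhood of the closed disc, injective on the
    closed disc, an immersion there, and its tangent planes are totally real
    (T_q K ∩ i T_q K = {0}). *)
Definition totally_real_disc_param (phi : R * R -> C2) : Prop :=
  (exists U, r2open U /\ (forall p, cdisc p -> U p) /\ C2map_Ck 2 U phi) /\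
  (forall p q, cdisc p -> cdisc q -> phi p = phi q -> p = q) /\
  (forall p a b, cdisc p ->
     c2add (c2scal a (pd1 phi p)) (c2scal b (pd2 phi p)) = c2zero -> a = 0 /\ b = 0) /\
  (forall q v, TK phi q v -> (exists w, TK phi q w /\ v = c2i w) -> v = c2zero).

Definition is_derive_C2 (gamma : R -> C2) (t : R) (v : C2) : Prop :=
  is_derive (fun s => comp1 (gamma s)) t (comp1 v) /\
  is_derive (fun s => comp2 (gamma s)) t (comp2 v) /\
  is_derive (fun s => comp3 (gamma s)) t (comp3 v) /\
  is_derive (fun s => comp4 (gamma s)) t (comp4 v).

(* Main.v *)
Require Import Defs.
From Stdlib Require Import Reals Lra Psatz.
From Coquelicot Require Import Coquelicot.
Open Scope R_scope.

Lemma c2norm_eq (w : C2) : c2norm w =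
  sqrt (comp1 w ^ 2 + comp2 w ^ 2 + comp3 w ^ 2 + comp4 w ^ 2).
Proof.
  destruct w as [[x1 x2] [x3 x4]]. unfold c2norm, Cmod, comp1, comp2, comp3, comp4; simpl fst; simpl snd.
  rewrite !pow2_sqrt by nra. f_equal; ring.
Qed.

Lemma abs_le_sqrt x S : x ^ 2 <= S -> Rabs x <= sqrt S.
Proof.
  intros H. rewrite <- sqrt_Rsqr_abs. apply sqrt_le_1_alt. unfold Rsqr. nra.
Qed.

Lemma comp_le_norm w :
  Rabs (comp1 w) <= c2norm w /\ Rabs (comp2 w) <= c2norm w /\
  Rabs (comp3 w) <= c2norm w /\ Rabs (comp4 w) <= c2norm w.
Proof.
  rewrite c2norm_eq; repeat split; apply abs_le_sqrt; nra.
Qed.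

Definition N1 (w : C2) := Rabs (comp1 w) + Rabs (comp2 w) + Rabs (comp3 w) + Rabs (comp4 w).

Lemma norm_le_N1 w : c2norm w <= N1 w.
Proof.
  rewrite c2norm_eq. unfold N1.
  assert (0 <= Rabs (comp1 w) + Rabs (comp2 w) + Rabs (comp3 w) + Rabs (comp4 w)) by
    (pose proof (Rabs_pos (comp1 w)); pose proof (Rabs_pos (comp2 w));
     pose proof (Rabs_pos (comp3 w)); pose proof (Rabs_pos (comp4 w)); lra).
  rewrite <- (sqrt_pow2 _ H). apply sqrt_le_1_alt.
  pose proof (Rabs_pos (comp1 w)); pose proof (Rabs_pos (comp2 w));
  pose proof (Rabs_pos (comp3 w)); pose proof (Rabs_pos (comp4 w)).
  rewrite <- (pow2_abs (comp1 w)), <- (pow2_abs (comp2 w)), <- (pow2_abs (comp3 w)), <- (pow2_abs (comp4 w)).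
  nra.
Qed.

Lemma Cmod_fst E : Rabs (fst E) <= Cmod E.
Proof. pose proof (Rmax_Cmod E). pose proof (Rmax_l (Rabs (fst E)) (Rabs (snd E))). lra. Qed.
Lemma Cmod_snd E : Rabs (snd E) <= Cmod E.
Proof. pose proof (Rmax_Cmod E). pose proof (Rmax_r (Rabs (fst E)) (Rabs (snd E))). lra. Qed.

Lemma c2add_sub z x : c2add z (c2sub x z) = x.
Proof.
  destruct z as [[? ?] [? ?]], x as [[? ?] [? ?]]; unfold c2add, c2sub, Cminus, Cplus, Copp; simpl.
  f_equal; f_equal; ring.
Qed.

Lemma R1 p q P1 P2 d1 d2 M k n eps :
  Rabs (P1 - p - d1) <= k * n -> Rabs (P2 - q - d2) <= k * n ->
  Rabs d1 <= M * n -> Rabs d2 <= M * n -> 0 <= n -> 0 <= k <= 1 -> 0 <= M ->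
  2 * (Rabs p + Rabs q) * k <= eps / 2 -> 2 * (M + 1) ^ 2 * n <= eps / 2 ->
  Rabs ((P1 ^ 2 + P2 ^ 2 - 1) - (p ^ 2 + q ^ 2 - 1) - 2 * (p * d1 + q * d2)) <= eps * n.
Proof.
  intros H1 H2 H3 H4 Hn Hk HM He1 He2.
  set (e1 := P1 - p - d1) in *. set (e2 := P2 - q - d2) in *.
  replace ((P1 ^ 2 + P2 ^ 2 - 1) - (p ^ 2 + q ^ 2 - 1) - 2 * (p * d1 + q * d2))
    with (2 * p * e1 + 2 * q * e2 + (d1 + e1) ^ 2 + (d2 + e2) ^ 2) by (unfold e1, e2; ring).
  assert (A1 : Rabs (2 * p * e1) <= 2 * Rabs p * (k * n)).
  { rewrite !Rabs_mult, Rabs_right by lra. apply Rmult_le_compat_l; [pose proof (Rabs_pos p); lra| lra]. }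
  assert (A2 : Rabs (2 * q * e2) <= 2 * Rabs q * (k * n)).
  { rewrite !Rabs_mult, Rabs_right by lra. apply Rmult_le_compat_l; [pose proof (Rabs_pos q); lra| lra]. }
  assert (B1 : Rabs (d1 + e1) <= (M + 1) * n).
  { pose proof (Rabs_triang d1 e1). nra. }
  assert (B2 : Rabs (d2 + e2) <= (M + 1) * n).
  { pose proof (Rabs_triang d2 e2). nra. }
  assert (C1 : (d1 + e1) ^ 2 <= (M + 1) ^ 2 * n ^ 2).
  { rewrite <- pow2_abs. pose proof (Rabs_pos (d1 + e1)). nra. }
  assert (C2 : (d2 + e2) ^ 2 <= (M + 1) ^ 2 * n ^ 2).
  { rewrite <- pow2_abs. pose proof (Rabs_pos (d2 + e2)). nra. }
  assert (D : 2 * (M + 1) ^ 2 * n ^ 2 <= eps / 2 * n) by nra.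
  assert (D' : 2 * (Rabs p + Rabs q) * k * n <= eps / 2 * n) by nra.
  apply Rabs_le. split.
  - assert (- (2 * Rabs p * (k * n)) <= 2 * p * e1) by (pose proof (Rle_abs (-(2*p*e1))); rewrite Rabs_Ropp in *; lra). 
    assert (- (2 * Rabs q * (k * n)) <= 2 * q * e2) by (pose proof (Rle_abs (-(2*q*e2))); rewrite Rabs_Ropp in *; lra).
    pose proof (pow2_ge_0 (d1+e1)); pose proof (pow2_ge_0 (d2+e2)).
    assert (0 <= eps) by (pose proof (Rabs_pos p); pose proof (Rabs_pos q); nra).
    assert (0 <= eps * n) by nra. lra.
  - assert (2 * p * e1 <= 2 * Rabs p * (k * n)) by (pose proof (Rle_abs (2*p*e1)); lra).
    assert (2 * q * e2 <= 2 * Rabs q * (k * n)) by (pose proof (Rle_abs (2*q*e2)); lra).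
    lra.
Qed.
Lemma R2 a b c d x y u v n :
  Rabs x <= n -> Rabs y <= n -> Rabs u <= n -> Rabs v <= n ->
  Rabs (a*x + b*y + c*u + d*v) <= (Rabs a + Rabs b + Rabs c + Rabs d) * n.
Proof.
  intros Hx Hy Hu Hv. 
  pose proof (Rabs_triang (a*x + b*y + c*u) (d*v)).
  pose proof (Rabs_triang (a*x + b*y) (c*u)).
  pose proof (Rabs_triang (a*x) (b*y)).
  rewrite !Rabs_mult in *.
  pose proof (Rabs_pos a) as Pa; pose proof (Rabs_pos b) as Pb; pose proof (Rabs_pos c) as Pc; pose proof (Rabs_pos d) as Pd.
  pose proof (Rmult_le_compat_l _ _ _ Pa Hx).
  pose proof (Rmult_le_compat_l _ _ _ Pb Hy).
  pose proof (Rmult_le_compat_l _ _ _ Pc Hu).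
  pose proof (Rmult_le_compat_l _ _ _ Pd Hv).
  lra.
Qed.

Definition Dre (a1 a2 : C) (w : C2) :=
  fst a1 * comp1 w + (- snd a1) * comp2 w + fst a2 * comp3 w + (- snd a2) * comp4 w.
Definition Dim (a1 a2 : C) (w : C2) :=
  snd a1 * comp1 w + fst a1 * comp2 w + snd a2 * comp3 w + fst a2 * comp4 w.

Lemma D_eq a1 a2 w : Cplus (Cmult a1 (fst w)) (Cmult a2 (snd w)) = (Dre a1 a2 w, Dim a1 a2 w).
Proof.
  destruct a1, a2, w as [[? ?] [? ?]]; unfold Dre, Dim, Cplus, Cmult, comp1, comp2, comp3, comp4; simpl.
  f_equal; ring.
Qed.

Definition Mof (a1 a2 : C) := Rabs (fst a1) + Rabs (snd a1) + Rabs (fst a2) + Rabs (snd a2).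

Lemma Dre_bound a1 a2 w : Rabs (Dre a1 a2 w) <= Mof a1 a2 * c2norm w.
Proof.
  destruct (comp_le_norm w) as (?&?&?&?). unfold Dre, Mof.
  pose proof (R2 (fst a1) (- snd a1) (fst a2) (- snd a2) _ _ _ _ _ H H0 H1 H2).
  rewrite !Rabs_Ropp in H3. exact H3.
Qed.
Lemma Dim_bound a1 a2 w : Rabs (Dim a1 a2 w) <= Mof a1 a2 * c2norm w.
Proof.
  destruct (comp_le_norm w) as (?&?&?&?). unfold Dim, Mof.
  pose proof (R2 (snd a1) (fst a1) (snd a2) (fst a2) _ _ _ _ _ H H0 H1 H2). lra.
Qed.

Lemma Mof_pos a1 a2 : 0 <= Mof a1 a2.
Proof. unfold Mof. pose proof (Rabs_pos (fst a1)); pose proof (Rabs_pos (snd a1));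
  pose proof (Rabs_pos (fst a2)); pose proof (Rabs_pos (snd a2)); lra. Qed.

Lemma c2norm_pos w : 0 <= c2norm w.
Proof. apply sqrt_pos. Qed.

Lemma Cmod_sq X : Cmod X ^ 2 = fst X ^ 2 + snd X ^ 2.
Proof. unfold Cmod. rewrite pow2_sqrt; nra. Qed.

Lemma rdiff_rho (h : C2 -> C) z a1 a2 :
  (forall eps, 0 < eps -> exists delta, 0 < delta /\
      forall w, c2norm w < delta ->
        Cmod (Cminus (Cminus (h (c2add z w)) (h z))
                     (Cplus (Cmult a1 (fst w)) (Cmult a2 (snd w))))
        <= eps * c2norm w) ->
  is_rdiff (fun w => Cmod (h w) ^ 2 - 1) z
    (fun w => 2 * (fst (h z) * Dre a1 a2 w + snd (h z) * Dim a1 a2 w)).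
Proof.
  intros Hd. split; [|split].
  - intros u v. destruct u as [[? ?] [? ?]], v as [[? ?] [? ?]].
    unfold Dre, Dim, c2add, Cplus, comp1, comp2, comp3, comp4; simpl. ring.
  - intros r u. destruct u as [[? ?] [? ?]].
    unfold Dre, Dim, c2scal, Cmult, RtoC, comp1, comp2, comp3, comp4; simpl. ring.
  - intros eps Heps.
    set (p := fst (h z)). set (q := snd (h z)). set (M := Mof a1 a2).
    pose proof (Mof_pos a1 a2) as HM. fold M in HM.
    pose proof (Rabs_pos p). pose proof (Rabs_pos q).
    set (k := Rmin 1 (eps / (4 * (Rabs p + Rabs q) + 1))).
    assert (Hk0 : 0 < k).
    { unfold k. apply Rmin_glb_lt; [lra|]. apply Rdiv_lt_0_compat; lra. }
    assert (Hk1 : k <= 1) by apply Rmin_l.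
    assert (Hk2 : 2 * (Rabs p + Rabs q) * k <= eps / 2).
    { assert (k <= eps / (4 * (Rabs p + Rabs q) + 1)) by apply Rmin_r.
      apply Rmult_le_compat_l with (r := 4 * (Rabs p + Rabs q) + 1) in H1; [|lra].
      replace ((4 * (Rabs p + Rabs q) + 1) * (eps / (4 * (Rabs p + Rabs q) + 1))) with eps in H1
        by (field; lra). nra. }
    destruct (Hd k Hk0) as [d1 [Hd1 Hw]].
    exists (Rmin d1 (eps / (4 * (M + 1) ^ 2 + 1))). split.
    { apply Rmin_glb_lt; [lra|]. apply Rdiv_lt_0_compat; nra. }
    intros w Hn.
    assert (Hn1 : c2norm w < d1) by (eapply Rlt_le_trans; [exact Hn| apply Rmin_l]).
    assert (Hn2 : c2norm w <= eps / (4 * (M + 1) ^ 2 + 1)) by (left; eapply Rlt_le_trans; [exact Hn| apply Rmin_r]).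
    assert (He2 : 2 * (M + 1) ^ 2 * c2norm w <= eps / 2).
    { apply Rmult_le_compat_l with (r := 4 * (M + 1) ^ 2 + 1) in Hn2; [|nra].
      replace ((4 * (M + 1) ^ 2 + 1) * (eps / (4 * (M + 1) ^ 2 + 1))) with eps in Hn2
        by (field; nra). pose proof (c2norm_pos w). nra. }
    specialize (Hw w Hn1). rewrite D_eq in Hw.
    pose proof (Cmod_fst (Cminus (Cminus (h (c2add z w)) (h z)) (Dre a1 a2 w, Dim a1 a2 w))) as F1.
    pose proof (Cmod_snd (Cminus (Cminus (h (c2add z w)) (h z)) (Dre a1 a2 w, Dim a1 a2 w))) as F2.
    unfold Cminus, Cplus, Copp in F1, F2, Hw; simpl in F1, F2, Hw. fold p q in F1, F2, Hw.
    rewrite !Cmod_sq.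
    apply (R1 p q _ _ _ _ M k).
    + fold p in F1. replace (fst (h (c2add z w)) - p - Dre a1 a2 w) with
        (fst (h (c2add z w)) + - p + - Dre a1 a2 w) by ring. lra.
    + fold q in F2. replace (snd (h (c2add z w)) - q - Dim a1 a2 w) with
        (snd (h (c2add z w)) + - q + - Dim a1 a2 w) by ring. lra.
    + apply Dre_bound.
    + apply Dim_bound.
    + apply c2norm_pos.
    + lra.
    + exact HM.
    + exact Hk2.
    + exact He2.
Qed.
Lemma conv_lim A B s e : s <> 0 -> Rabs (A / s - B) < e -> Rabs (A - s * B) <= e * Rabs s.
Proof.
  intros Hs H. replace (A - s * B) with (s * (A / s - B)) by (field; auto).
  rewrite Rabs_mult. pose proof (Rabs_pos s). nra.
Qed.

Lemma comp_sub x z :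
  comp1 (c2sub x z) = comp1 x - comp1 z /\ comp2 (c2sub x z) = comp2 x - comp2 z /\
  comp3 (c2sub x z) = comp3 x - comp3 z /\ comp4 (c2sub x z) = comp4 x - comp4 z.
Proof.
  destruct x as [[? ?] [? ?]], z as [[? ?] [? ?]]; unfold comp1, comp2, comp3, comp4, c2sub, Cminus, Cplus, Copp; simpl.
  repeat split; ring.
Qed.

Lemma chain_gen (sel : C -> R) (c1 c2 c3 c4 : R) (h : C2 -> C) (gamma : R -> C2) t v (a1 a2 : C) :
  (forall X, Rabs (sel X) <= Cmod X) ->
  (forall A B X, sel (Cminus (Cminus A B) X) = sel A - sel B - sel X) ->
  (forall w, sel (Cplus (Cmult a1 (fst w)) (Cmult a2 (snd w))) =
             c1 * comp1 w + c2 * comp2 w + c3 * comp3 w + c4 * comp4 w) ->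
  (forall eps, 0 < eps -> exists delta, 0 < delta /\
      forall w, c2norm w < delta ->
        Cmod (Cminus (Cminus (h (c2add (gamma t) w)) (h (gamma t)))
                     (Cplus (Cmult a1 (fst w)) (Cmult a2 (snd w))))
        <= eps * c2norm w) ->
  is_derive_C2 gamma t v ->
  c1 * comp1 v + c2 * comp2 v + c3 * comp3 v + c4 * comp4 v = 0 ->
  derivable_pt_lim (fun s => sel (h (gamma s))) t 0.
Proof.
  intros Hsel Hlin HD Hhol [G1 [G2 [G3 G4]]] Hv.
  apply is_derive_Reals in G1, G2, G3, G4.
  intros eps Heps.
  set (C := Rabs c1 + Rabs c2 + Rabs c3 + Rabs c4).
  set (V := N1 v).
  assert (HC : 0 <= C) by (unfold C; pose proof (Rabs_pos c1); pose proof (Rabs_pos c2);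
     pose proof (Rabs_pos c3); pose proof (Rabs_pos c4); lra).
  assert (HV : 0 <= V) by (unfold V, N1; pose proof (Rabs_pos (comp1 v)); pose proof (Rabs_pos (comp2 v));
     pose proof (Rabs_pos (comp3 v)); pose proof (Rabs_pos (comp4 v)); lra).
  set (e2 := Rmin 1 (eps / (4 * (C + 1)))).
  assert (He20 : 0 < e2) by (unfold e2; apply Rmin_glb_lt; [lra| apply Rdiv_lt_0_compat; lra]).
  assert (He21 : e2 <= 1) by apply Rmin_l.
  assert (He22 : C * e2 <= eps / 4).
  { assert (e2 <= eps / (4 * (C + 1))) by apply Rmin_r.
    apply Rmult_le_compat_l with (r := C + 1) in H; [|lra].
    replace ((C + 1) * (eps / (4 * (C + 1)))) with (eps / 4) in H by (field; lra). nra. }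
  set (e1 := eps / (4 * (4 + V))).
  assert (He10 : 0 < e1) by (unfold e1; apply Rdiv_lt_0_compat; lra).
  assert (He11 : e1 * (4 + V) = eps / 4) by (unfold e1; field; lra).
  destruct (Hhol e1 He10) as [dh [Hdh Hw]].
  destruct (G1 e2 He20) as [d1 Hd1].
  destruct (G2 e2 He20) as [d2 Hd2].
  destruct (G3 e2 He20) as [d3 Hd3].
  destruct (G4 e2 He20) as [d4 Hd4].
  assert (Hdel : 0 < Rmin (Rmin (Rmin d1 d2) (Rmin d3 d4)) (dh / (4 + V))).
  { destruct d1, d2, d3, d4; simpl.
    repeat apply Rmin_glb_lt; try lra. apply Rdiv_lt_0_compat; lra. }
  exists (mkposreal _ Hdel). simpl. intros s Hs0 Hs.
  assert (Hs1 : Rabs s < d1) by (eapply Rlt_le_trans; [exact Hs|];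
     eapply Rle_trans; [apply Rmin_l|]; eapply Rle_trans; [apply Rmin_l|]; apply Rmin_l).
  assert (Hs2 : Rabs s < d2) by (eapply Rlt_le_trans; [exact Hs|];
     eapply Rle_trans; [apply Rmin_l|]; eapply Rle_trans; [apply Rmin_l|]; apply Rmin_r).
  assert (Hs3 : Rabs s < d3) by (eapply Rlt_le_trans; [exact Hs|];
     eapply Rle_trans; [apply Rmin_l|]; eapply Rle_trans; [apply Rmin_r|]; apply Rmin_l).
  assert (Hs4 : Rabs s < d4) by (eapply Rlt_le_trans; [exact Hs|];
     eapply Rle_trans; [apply Rmin_l|]; eapply Rle_trans; [apply Rmin_r|]; apply Rmin_r).
  assert (Hsh : Rabs s < dh / (4 + V)) by (eapply Rlt_le_trans; [exact Hs|]; apply Rmin_r).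
  pose proof (conv_lim _ _ _ _ Hs0 (Hd1 s Hs0 Hs1)) as U1.
  pose proof (conv_lim _ _ _ _ Hs0 (Hd2 s Hs0 Hs2)) as U2.
  pose proof (conv_lim _ _ _ _ Hs0 (Hd3 s Hs0 Hs3)) as U3.
  pose proof (conv_lim _ _ _ _ Hs0 (Hd4 s Hs0 Hs4)) as U4.
  set (w := c2sub (gamma (t + s)) (gamma t)).
  destruct (comp_sub (gamma (t + s)) (gamma t)) as (W1 & W2 & W3 & W4). fold w in W1, W2, W3, W4.
  pose proof (Rabs_pos s) as Ps.
  assert (Nw : c2norm w <= (4 + V) * Rabs s).
  { eapply Rle_trans; [apply norm_le_N1|]. unfold N1, V, N1. rewrite W1, W2, W3, W4.
    assert (forall A B, Rabs (A - s * B) <= e2 * Rabs s -> Rabs A <= Rabs s + Rabs s * Rabs B).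
    { intros A B HAB. pose proof (Rabs_triang (A - s * B) (s * B)). rewrite Rabs_mult in H.
      replace (A - s * B + s * B) with A in H by ring. nra. }
    apply H in U1, U2, U3, U4. lra. }
  assert (Hwd : c2norm w < dh).
  { apply Rmult_lt_compat_l with (r := 4 + V) in Hsh; [|lra].
    replace ((4 + V) * (dh / (4 + V))) with dh in Hsh by (field; lra). lra. }
  specialize (Hw w Hwd). unfold w in Hw at 1. rewrite c2add_sub in Hw. fold w in Hw.
  pose proof (Hsel (Cminus (Cminus (h (gamma (t + s))) (h (gamma t)))
                     (Cplus (Cmult a1 (fst w)) (Cmult a2 (snd w))))) as Hs'.
  rewrite Hlin, HD, W1, W2, W3, W4 in Hs'.
  set (DU := c1 * (comp1 (gamma (t + s)) - comp1 (gamma t) - s * comp1 v) +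
             c2 * (comp2 (gamma (t + s)) - comp2 (gamma t) - s * comp2 v) +
             c3 * (comp3 (gamma (t + s)) - comp3 (gamma t) - s * comp3 v) +
             c4 * (comp4 (gamma (t + s)) - comp4 (gamma t) - s * comp4 v)).
  assert (HDU : Rabs DU <= C * (e2 * Rabs s)) by (apply R2; assumption).
  assert (Eq : c1 * (comp1 (gamma (t + s)) - comp1 (gamma t)) + c2 * (comp2 (gamma (t + s)) - comp2 (gamma t)) +
      c3 * (comp3 (gamma (t + s)) - comp3 (gamma t)) + c4 * (comp4 (gamma (t + s)) - comp4 (gamma t))
      = DU + s * (c1 * comp1 v + c2 * comp2 v + c3 * comp3 v + c4 * comp4 v)) by (unfold DU; ring).
  rewrite Hv, Rmult_0_r, Rplus_0_r in Eq. rewrite Eq in Hs'.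
  set (X := sel (h (gamma (t + s))) - sel (h (gamma t))) in *.
  assert (HX : Rabs X <= eps / 2 * Rabs s).
  { pose proof (Rabs_triang (X - DU) DU). replace (X - DU + DU) with X in H by ring.
    assert (Rabs (X - DU) <= e1 * ((4 + V) * Rabs s)).
    { eapply Rle_trans; [exact Hs'|]. eapply Rle_trans; [exact Hw|]. apply Rmult_le_compat_l; lra. }
    nra. }
  rewrite Rminus_0_r. unfold Rdiv. rewrite Rabs_mult, Rabs_inv.
  assert (0 < Rabs s) by (apply Rabs_pos_lt; auto).
  apply Rmult_lt_reg_r with (r := Rabs s); [lra|]. rewrite Rmult_assoc, Rinv_l by lra. nra.
Qed.
Lemma D_i a1 a2 v : Dre a1 a2 (c2i v) = - Dim a1 a2 v /\ Dim a1 a2 (c2i v) = Dre a1 a2 v.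
Proof.
  destruct v as [[? ?] [? ?]]; unfold Dre, Dim, c2i, Cmult, Ci, comp1, comp2, comp3, comp4; simpl.
  split; ring.
Qed.

Lemma const_of_deriv (f : R -> R) a b :
  (forall x, a < x < b -> derivable_pt_lim f x 0) ->
  forall s t, a < s < b -> a < t < b -> f s = f t.
Proof.
  intros Hd s t Hs Ht.
  destruct (MVT_gen f s t (fun _ => 0)) as [c [Hc Heq]].
  - intros x Hx. apply is_derive_Reals. apply Hd.
    split; [apply Rlt_trans with (Rmin s t); [apply Rmin_glb_lt; lra| lra]
           |apply Rlt_trans with (Rmax s t); [lra| apply Rmax_lub_lt; lra]].
  - intros x Hx. apply derivable_continuous_pt. exists 0. apply Hd.
    split; [apply Rlt_le_trans with (Rmin s t); [apply Rmin_glb_lt; lra| lra]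
           |apply Rle_lt_trans with (Rmax s t); [lra| apply Rmax_lub_lt; lra]].
  - lra.
Qed.

Theorem lemma2p3
  (Omega : C2 -> Prop) (h : C2 -> C) (phi : R * R -> C2)
  (HOmega : c2domain Omega)
  (Hh : holomorphic_on Omega h)
  (Hdrho : forall z, Omega z -> Cmod (h z) ^ 2 - 1 = 0 ->
     exists L, is_rdiff (fun w => Cmod (h w) ^ 2 - 1) z L /\ exists v, L v <> 0)
  (HK : totally_real_disc_param phi)
  (HKM : forall p, cdisc p -> Omega (phi p) /\ Cmod (h (phi p)) ^ 2 - 1 = 0) :
  forall (gamma gamma' : R -> C2) (a b : R),
    (forall t, a < t < b ->
       (exists p, cdisc p /\ phi p = gamma t) /\
       is_derive_C2 gamma t (gamma' t) /\
       TK phi (gamma t) (gamma' t) /\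
       TCM (fun w => Cmod (h w) ^ 2 - 1) (gamma t) (gamma' t)) ->
    forall s t, a < s < b -> a < t < b -> h (gamma s) = h (gamma t).
Proof.
  intros gamma gamma' a b Hg.
  assert (Key : forall x, a < x < b ->
    derivable_pt_lim (fun s => fst (h (gamma s))) x 0 /\
    derivable_pt_lim (fun s => snd (h (gamma s))) x 0).
  { intros x Hx. destruct (Hg x Hx) as [[p [Hp Hpe]] [Hd [_ [TC1 TC2]]]].
    destruct (HKM p Hp) as [HO Hm]. rewrite Hpe in HO, Hm.
    destruct (Hh _ HO) as [a1 [a2 Hlim]].
    pose proof (rdiff_rho h _ a1 a2 Hlim) as HL.
    pose proof (TC1 _ HL) as E1. pose proof (TC2 _ HL) as E2. simpl in E1, E2.
    destruct (D_i a1 a2 (gamma' x)) as [I1 I2]. rewrite I1, I2 in E2.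
    rewrite Cmod_sq in Hm.
    set (P := fst (h (gamma x))) in *. set (Q := snd (h (gamma x))) in *.
    set (X := Dre a1 a2 (gamma' x)) in *. set (Y := Dim a1 a2 (gamma' x)) in *.
    assert (HX : X = 0).
    { replace X with (X * (P ^ 2 + Q ^ 2)) by (replace (P ^ 2 + Q ^ 2) with 1 by lra; ring).
      replace (X * (P ^ 2 + Q ^ 2)) with (P * (2 * (P * X + Q * Y)) / 2 + Q * (2 * (P * - Y + Q * X)) / 2) by (field).
      rewrite E1, E2. field. }
    assert (HY : Y = 0).
    { replace Y with (Y * (P ^ 2 + Q ^ 2)) by (replace (P ^ 2 + Q ^ 2) with 1 by lra; ring).
      replace (Y * (P ^ 2 + Q ^ 2)) with (Q * (2 * (P * X + Q * Y)) / 2 - P * (2 * (P * - Y + Q * X)) / 2) by (field).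
      rewrite E1, E2. field. }
    split.
    - apply (chain_gen fst (fst a1) (- snd a1) (fst a2) (- snd a2) h gamma x (gamma' x) a1 a2).
      + apply Cmod_fst.
      + intros A B Z. unfold Cminus, Cplus, Copp; simpl. ring.
      + intros w. rewrite D_eq. reflexivity.
      + exact Hlim.
      + exact Hd.
      + exact HX.
    - apply (chain_gen snd (snd a1) (fst a1) (snd a2) (fst a2) h gamma x (gamma' x) a1 a2).
      + apply Cmod_snd.
      + intros A B Z. unfold Cminus, Cplus, Copp; simpl. ring.
      + intros w. rewrite D_eq. reflexivity.
      + exact Hlim.
      + exact Hd.
      + exact HY. }
  intros s t Hs Ht.
  rewrite (surjective_pairing (h (gamma s))), (surjective_pairing (h (gamma t))).
  f_equal.
  - apply (const_of_deriv (fun s => fst (h (gamma s))) a b); auto. intros; apply Key; auto.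
  - apply (const_of_deriv (fun s => snd (h (gamma s))) a b); auto. intros; apply Key; auto.
Qed.
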